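(* For any instance $\mathcal{I}$ of the online volunteer notification problem, $\mathbf{LP}_{\mathcal{I}}$ is at least the expected number of tasks completed by the clairvoyant solution.
   Context: Online volunteer notification problem. An instance $\mathcal{I}$ consists of volunteers $[V]$, task types $[S]$, horizon $T$, arrival probabilities $\lambda_{s,t}\ge0$ with $\sum_{s=1}^S\lambda_{s,t}\le1$, match probabilities $p_{v,s}\in[0,1]$, and a probability mass function $g$ on the positive integers with CDF $G(\tau)=\sum_{i\le\tau}g(i)$, $G(0)=0$. In each period $t$ at most one task arrives, of type $s$ with probability $\lambda_{s,t}$, independently across periods. All volunteers start active. Upon an arrival, a subset of volunteers is notified; each notified active volunteer $v$ responds positively independently with probability $p_{v,s}$, and the task is completed iff at least one does. A volunteer active and notified at time $t$ becomes inactive (regardless of response) and becomes active again at time $t+Z$, where $Z\sim g$ is independent; inactive volunteers ignore notifications and are unaffected by them. Clairvoyant solution: the best (maximum expected number of completed tasks) notification strategy that knows the entire sequence of arrivals in advance and the state (active/inactive) of every volunteer in every period, but does not know the realized inactivity length $Z$ of a volunteer notified at time $t$ before time $t$ (i.e., decisions at time $t$ cannot depend on inactivity lengths triggered at times $\ge t$). $\mathbf{LP}_{\mathcal{I}}=\max\sum_{t=1}^T\sum_{s=1}^S\lambda_{s,t}\min\{\sum_{v=1}^V x_{v,s,t}p_{v,s},1\}$ subject to $0\le x_{v,s,t}\le1$ for all $v,s,t$ and $\sum_{\tau=1}^t\sum_{s=1}^S\lambda_{s,\tau}x_{v,s,\tau}(1-G(t-\tau))\le1$ for all $v,t$. *)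

(* Defs.v *)
From HB Require Import structures.
From mathcomp Require Import all_boot all_order all_algebra.
From mathcomp Require Import all_classical all_reals all_analysis.
Set Implicit Arguments. Unset Strict Implicit. Unset Printing Implicit Defensive.
Import Order.TTheory GRing.Theory Num.Theory.
Local Open Scope ring_scope.

(* Conventions: volunteers 'I_V, task types 'I_S, periods 'I_T; the paper's
   period t (1..T) is the ordinal t-1 here.  lam s t = lambda_{s,t}, p v s = p_{v,s},
   g : nat -> R the pmf of the inactivity length (g 0 = 0 required). *)

Definition cdfG (R : realType) (g : nat -> R) (k : nat) : R :=
  \sum_(1 <= i < k.+1) g i.

Definition LP_obj (R : realType) (V S T : nat) (lam : 'I_S -> 'I_T -> R)
  (p : 'I_V -> 'I_S -> R) (x : 'I_V -> 'I_S -> 'I_T -> R) : R :=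
  \sum_(t < T) \sum_(s < S)
     lam s t * Num.min (\sum_(v < V) x v s t * p v s) 1.

Definition LP_feasible (R : realType) (V S T : nat) (lam : 'I_S -> 'I_T -> R)
  (g : nat -> R) (x : 'I_V -> 'I_S -> 'I_T -> R) : Prop :=
  (forall v s t, 0 <= x v s t <= 1) /\
  (forall (v : 'I_V) (t : 'I_T),
     \sum_(tau < T | (tau <= t)%N) \sum_(s < S)
        lam s tau * x v s tau * (1 - cdfG g (t - tau)) <= 1).

(* An outcome consists of
   - the arrival sequence: arr t = Some s (task of type s at t) or None;
   - inactivity draws: zz (v,t) = k means that if v is notified while active
     at t, it becomes inactive for Z = k+1 periods when k < T, and Z >= T+1
     when k = T (such a volunteer never comes back within the horizon, so
     truncating Z at T+1 is distributionally exact);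
   - response draws: rr (v,t,s) = whether v would respond positively to a
     task of type s notified at t. *)
Definition outcome (V S T : nat) : finType :=
  ({ffun 'I_T -> option 'I_S} * {ffun 'I_V * 'I_T -> 'I_T.+1}
    * {ffun 'I_V * 'I_T * 'I_S -> bool})%type.

Definition arr_of V S T (w : outcome V S T) := w.1.1.
Definition z_of V S T (w : outcome V S T) := w.1.2.
Definition r_of V S T (w : outcome V S T) := w.2.

Definition prob (R : realType) (V S T : nat) (lam : 'I_S -> 'I_T -> R)
  (p : 'I_V -> 'I_S -> R) (g : nat -> R) (w : outcome V S T) : R :=
  (\prod_(t < T) match arr_of w t with
                 | Some s => lam s t
                 | None => 1 - \sum_(s < S) lam s t end) *
  (\prod_(vt : 'I_V * 'I_T)
     let k := nat_of_ord (z_of w vt) in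
     if (k < T)%N then g k.+1 else 1 - cdfG g T) *
  (\prod_(vts : 'I_V * 'I_T * 'I_S)
     if r_of w vts then p vts.1.1 vts.2 else 1 - p vts.1.1 vts.2).

Definition policy (V S T : nat) := 'I_T -> outcome V S T -> 'I_V -> bool.

(* Clairvoyant information constraint: the decision at t may depend on the
   whole arrival sequence and on everything realized strictly before t
   (inactivity lengths and responses triggered at times < t), but not on
   inactivity lengths (or responses) triggered at times >= t. *)
Definition clairvoyant_admissible V S T (pol : policy V S T) : Prop :=
  forall (t : 'I_T) (w w' : outcome V S T),
    arr_of w = arr_of w' ->
    (forall (v : 'I_V) (tau : 'I_T), (tau < t)%N ->
        z_of w (v, tau) = z_of w' (v, tau) /\
        forall s, r_of w (v, tau, s) = r_of w' (v, tau, s)) ->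
    forall v, pol t w v = pol t w' v.

Section Dynamics.
Variables (V S T : nat) (pol : policy V S T) (w : outcome V S T).

Definition notified (n : nat) (v : 'I_V) : bool :=
  match (insub n : option 'I_T) with
  | Some t => (arr_of w t != None) && pol t w v
  | None => false
  end.

Definition zlen (n : nat) (v : 'I_V) : nat :=
  match (insub n : option 'I_T) with
  | Some t => (nat_of_ord (z_of w (v, t))).+1
  | None => 0
  end.

(* ret n v = the period at which v is (next) active, after periods 0..n-1. *)
Fixpoint ret (n : nat) (v : 'I_V) : nat :=
  match n with
  | 0 => 0
  | m.+1 => let r := ret m v in
            if (r <= m)%N && notified m v then (m + zlen m v)%N else r
  end.

Definition active (n : nat) (v : 'I_V) : bool := (ret n v <= n)%N.

Definition completed (t : 'I_T) : bool :=
  match arr_of w t with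
  | Some s => [exists v, [&& pol t w v, active t v & r_of w (v, t, s)]]
  | None => false
  end.

Definition num_completed : nat := \sum_(t < T) completed t.
End Dynamics.

Definition expected_completed (R : realType) (V S T : nat)
  (lam : 'I_S -> 'I_T -> R) (p : 'I_V -> 'I_S -> R) (g : nat -> R)
  (pol : policy V S T) : R :=
  \sum_(w : outcome V S T) prob lam p g w * (num_completed pol w)%:R.

(* Main.v *)
Require Import Defs.
From HB Require Import structures.
From mathcomp Require Import all_boot all_order all_algebra.
From mathcomp Require Import all_classical all_reals all_analysis.
From mathcomp Require Import zify ring lra.
Import Order.TTheory GRing.Theory Num.Theory.
Import numFieldNormedType.Exports.
Local Open Scope ring_scope.

Section Indep.
Variables (R : realType) (I K : finType) (phi : I -> K -> R) (c0 : I).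

Definition upd (f : {ffun I -> K}) (k : K) : {ffun I -> K} :=
  [ffun c => if c == c0 then k else f c].

Lemma fiber_eq (Psi : {ffun I -> K} -> R)
  (HPsi : forall z k, Psi (upd z k) = Psi z) k k' :
  \sum_(z : {ffun I -> K} | z c0 == k) Psi z = \sum_(z : {ffun I -> K} | z c0 == k') Psi z.
Proof.
pose sw x := if x == k then k' else if x == k' then k else x.
pose sg z := upd z (sw (z c0)).
have sgK : involutive sg.
  move=> z; apply/ffunP => c; rewrite /sg /upd !ffunE.
  case: eqP => [->|//]; rewrite eqxx /sw.
  case: (z c0 =P k) => [->|Hk]; first by rewrite eqxx; case: eqP.
  case: (z c0 =P k') => [->|Hk']; first by rewrite eqxx.
  by move/eqP/negbTE: Hk => ->; move/eqP/negbTE: Hk' => ->.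
rewrite (reindex_inj (inv_inj sgK)) /=.
apply: eq_big => [z|z _]; last by rewrite /sg HPsi.
rewrite /sg /upd ffunE eqxx /sw.
case: (z c0 =P k) => [->|Hk]; first by rewrite eq_sym.
case: (z c0 =P k') => [_|Hk'] /=; first by rewrite eqxx.
by apply/eqP.
Qed.

Lemma indep (G : {ffun I -> K} -> R) (h : K -> R) (k0 : K) :
  (forall z k, G (upd z k) = G z) -> \sum_k phi c0 k = 1 ->
  \sum_(z : {ffun I -> K}) (\prod_c phi c (z c)) * G z * h (z c0) =
  (\sum_k phi c0 k * h k) * \sum_(z : {ffun I -> K}) (\prod_c phi c (z c)) * G z.
Proof.
move=> HG Hs.
pose rho (z : {ffun I -> K}) := \prod_(c | c != c0) phi c (z c).
pose Psi z := rho z * G z.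
have HPsi : forall z k, Psi (upd z k) = Psi z.
  move=> z k; rewrite /Psi HG; congr (_ * _).
  by apply: eq_bigr => c /negbTE Hc; rewrite /upd ffunE Hc.
have key : forall f : K -> R, \sum_(z : {ffun I -> K}) f (z c0) * Psi z =
    (\sum_k f k) * \sum_(z : {ffun I -> K} | z c0 == k0) Psi z.
  move=> f; rewrite (@partition_big _ _ _ _ _ _ _ (fun z : {ffun I -> K} => z c0) xpredT) //= big_distrl /=.
  apply: eq_bigr => k _; rewrite -(fiber_eq _ HPsi k k0) big_distrr /=.
  by apply: eq_bigr => z /eqP ->.
have E1 : forall z : {ffun I -> K}, \prod_c phi c (z c) = phi c0 (z c0) * rho z.
  by move=> z; rewrite (bigD1 c0).
transitivity (\sum_(z : {ffun I -> K}) (phi c0 (z c0) * h (z c0)) * Psi z).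
  by apply: eq_bigr => z _; rewrite E1 /Psi; ring.
transitivity ((\sum_k phi c0 k * h k) * \sum_(z : {ffun I -> K}) phi c0 (z c0) * Psi z); last first.
  by congr (_ * _); apply: eq_bigr => z _; rewrite E1 /Psi; ring.
by rewrite (key (fun k => phi c0 k * h k)) (key (phi c0)) Hs mul1r.
Qed.
End Indep.

Local Close Scope ring_scope.

Section Dyn.
Variables (V S T : nat) (pol : policy V S T).
Hypothesis pol_adm : clairvoyant_admissible pol.
Local Notation Om := (outcome V S T).

Definition agree n (w w' : Om) := arr_of w = arr_of w' /\
  forall u (m : 'I_T), (m < n)%N -> z_of w (u, m) = z_of w' (u, m) /\
     forall s, r_of w (u, m, s) = r_of w' (u, m, s).

Lemma agree_le n m w w' : (m <= n)%N -> agree n w w' -> agree m w w'.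
Proof.
move=> Hmn [Ha H]; split => // u k Hk; apply: H.
exact: leq_trans Hk Hmn.
Qed.

Lemma pol_agree (t : 'I_T) w w' v : agree t w w' -> pol t w v = pol t w' v.
Proof. by case=> Ha Hzr; apply: pol_adm. Qed.

Lemma ret_agree n w w' v : agree n w w' -> ret pol w n v = ret pol w' n v.
Proof.
elim: n => [//|n IH] Hag /=.
rewrite IH; last exact: agree_le Hag.
rewrite /notified /zlen; case: insubP => [t _ Ht|_] //.
case: (Hag) => Ha Hzr.
rewrite Ha (@pol_agree t w w' v (@agree_le n.+1 t w w' _ Hag)); last by rewrite Ht.
by case: (Hzr v t) => [|-> _] //; rewrite Ht.
Qed.

Lemma active_agree n w w' v : agree n w w' -> active pol w n v = active pol w' n v.
Proof. by move=> H; rewrite /active (@ret_agree n w w' v H). Qed.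

Lemma agree_updZ (w : Om) (c : 'I_V * 'I_T) k :
  agree c.2 w ((arr_of w, @upd _ _ c (z_of w) k), r_of w).
Proof.
split => // u m Hm; split => // /=.
rewrite /upd ffunE; case: eqP => // E.
by move: Hm; rewrite -E /= ltnn.
Qed.

Lemma agree_updR (w : Om) (c : 'I_V * 'I_T * 'I_S) b :
  agree c.1.2 w ((arr_of w, z_of w), @upd _ _ c (r_of w) b).
Proof.
split => // u m Hm; split => // s /=.
rewrite /upd ffunE; case: eqP => // E.
by move: Hm; rewrite -E /= ltnn.
Qed.

Lemma ret_after (w : Om) (tau : 'I_T) v :
  (ret pol w tau v <= tau)%N -> arr_of w tau != None -> pol tau w v ->
  forall j, (j <= z_of w (v, tau))%N ->
  ret pol w (tau + 1 + j) v = (tau + (z_of w (v, tau)).+1)%N.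
Proof.
move=> Ha Harr Hp; elim => [_|j IH Hj].
  rewrite addn0 addn1 /= Ha /notified /zlen valK Harr Hp /=.
  by rewrite addnS.
rewrite addnS /= IH; last exact: ltnW.
have -> : (tau + (z_of w (v, tau)).+1 <= tau + 1 + j)%N = false by lia.
by [].
Qed.

Definition Ev (w : Om) (t : nat) (v : 'I_V) (tau : 'I_T) : bool :=
  [&& arr_of w tau != None, pol tau w v, active pol w tau v &
      (t - tau <= z_of w (v, tau))%N].

Lemma Ev_lt (w : Om) t v (t1 t2 : 'I_T) : (t1 < t2)%N -> (t2 <= t)%N ->
  Ev w t v t1 -> Ev w t v t2 -> False.
Proof.
move=> H12 H2t /and4P [Harr Hp Hact Hz] /and4P [_ _ Hact2 _].
have Hj : (t2 - t1 - 1 <= z_of w (v, t1))%N by lia.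
have := @ret_after w t1 v Hact Harr Hp _ Hj.
have -> : (t1 + 1 + (t2 - t1 - 1) = t2)%N by lia.
move: Hact2; rewrite /active => Hr Hret; move: Hr; rewrite Hret.
lia.
Qed.

Lemma sumE_le1 (w : Om) (t : nat) v :
  (\sum_(tau < T | (tau <= t)%N) Ev w t v tau <= 1)%N.
Proof.
case: (pickP (fun tau : 'I_T => (tau <= t)%N && Ev w t v tau)) => [t0 /andP [H0 E0] | none].
  rewrite (bigD1 t0) //= E0 big1 // => tau /andP [Ht Hne].
  case E : (Ev w t v tau) => //; exfalso.
  case: (ltngtP t0 tau) => [H|H|H].
  - exact: Ev_lt H Ht E0 E.
  - exact: Ev_lt H H0 E E0.
  - by move: Hne; rewrite (val_inj H) eqxx.
rewrite big1 // => tau Ht.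
by have := none tau; rewrite Ht /= => ->.
Qed.
End Dyn.

Local Open Scope classical_set_scope.
Local Open Scope ring_scope.

Section Main.
Variables (R : realType) (V S T : nat) (lam : 'I_S -> 'I_T -> R)
  (p : 'I_V -> 'I_S -> R) (g : nat -> R).

Local Notation Om := (outcome V S T).
Local Notation A := {ffun 'I_T -> option 'I_S}.
Local Notation Z := {ffun 'I_V * 'I_T -> 'I_T.+1}.
Local Notation Rr := {ffun 'I_V * 'I_T * 'I_S -> bool}.

Definition phiA (t : 'I_T) (o : option 'I_S) : R :=
  match o with Some s => lam s t | None => 1 - \sum_(s < S) lam s t end.
Definition phiZ (c : 'I_V * 'I_T) (k : 'I_T.+1) : R :=
  if (k < T)%N then g k.+1 else 1 - cdfG g T.
Definition phiR (c : 'I_V * 'I_T * 'I_S) (b : bool) : R :=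
  if b then p c.1.1 c.2 else 1 - p c.1.1 c.2.
Definition PA (a : A) := \prod_t phiA t (a t).
Definition PZ (z : Z) := \prod_c phiZ c (z c).
Definition PR (r : Rr) := \prod_c phiR c (r c).

Lemma probE (w : Om) : prob lam p g w = PA (arr_of w) * PZ (z_of w) * PR (r_of w).
Proof. by []. Qed.

Lemma sum_outcome (F : Om -> R) :
  \sum_(w : Om) F w = \sum_(a : A) \sum_(z : Z) \sum_(r : Rr) F ((a, z), r).
Proof.
rewrite pair_bigA /= pair_bigA /=.
by apply: eq_bigr => [[[a z] r]] _.
Qed.

Lemma sum_option (F : option 'I_S -> R) :
  \sum_o F o = F None + \sum_s F (Some s).
Proof.
rewrite (bigD1 None) //=; congr (_ + _).
rewrite (@reindex_omap _ _ _ _ _ (fun s => Some s) (fun o => o)) //=.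
  by apply: eq_bigl => s; rewrite eqxx.
by move=> [s|].
Qed.

Lemma sumA t : \sum_o phiA t o = 1.
Proof. by rewrite sum_option /=; ring. Qed.

Lemma sumZ c : \sum_k phiZ c k = 1.
Proof.
rewrite big_ord_recr /= /phiZ ltnn.
have -> : \sum_(i < T) (if (widen_ord (leqnSn T) i < T)%N then g (widen_ord (leqnSn T) i).+1
   else 1 - cdfG g T) = \sum_(i < T) g i.+1.
  by apply: eq_bigr => i _; rewrite /= ltn_ord.
rewrite /cdfG big_add1 /= -(big_mkord xpredT (fun i => g i.+1)); ring.
Qed.

Lemma sumR c : \sum_b phiR c b = 1.
Proof. by rewrite big_bool /phiR /=; ring. Qed.

Lemma total_mass : \sum_(w : Om) prob lam p g w = 1.
Proof.
under eq_bigr do rewrite probE.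
rewrite sum_outcome /=.
have HA : \sum_(a : A) PA a = 1.
  by rewrite /PA -(bigA_distr_bigA) big1 // => t _; apply: sumA.
have HZ : \sum_(z : Z) PZ z = 1.
  by rewrite /PZ -(bigA_distr_bigA) big1 // => t _; apply: sumZ.
have HR : \sum_(r : Rr) PR r = 1.
  by rewrite /PR -(bigA_distr_bigA) big1 // => t _; apply: sumR.
rewrite -[RHS]HA; apply: eq_bigr => a _.
rewrite -[RHS]mulr1 -HZ big_distrr; apply: eq_bigr => z _ /=.
by rewrite -[RHS]mulr1 -HR big_distrr.
Qed.

Lemma indepZ (F : Om -> R) (c : 'I_V * 'I_T) (h : 'I_T.+1 -> R) :
  (forall (w : Om) k, F ((arr_of w, @upd _ _ c (z_of w) k), r_of w) = F w) ->
  \sum_(w : Om) prob lam p g w * F w * h (z_of w c) =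
  (\sum_k phiZ c k * h k) * \sum_(w : Om) prob lam p g w * F w.
Proof.
move=> HF; rewrite !sum_outcome big_distrr; apply: eq_bigr => a _ /=.
pose G (z : Z) := \sum_(r : Rr) PA a * PR r * F ((a, z), r).
transitivity (\sum_(z : Z) PZ z * G z * h (z c)).
  apply: eq_bigr => z _; rewrite /G big_distrr big_distrl /=.
  by apply: eq_bigr => r _; rewrite probE /=; ring.
transitivity ((\sum_k phiZ c k * h k) * \sum_(z : Z) PZ z * G z); last first.
  congr (_ * _); apply: eq_bigr => z _; rewrite /G big_distrr /=.
  by apply: eq_bigr => r _; rewrite probE /=; ring.
apply: (@indep R _ _ phiZ c G h ord0); last exact: sumZ.
move=> z k; rewrite /G; apply: eq_bigr => r _.
by rewrite -(HF ((a, z), r) k).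
Qed.

Lemma indepR (F : Om -> R) (c : 'I_V * 'I_T * 'I_S) (h : bool -> R) :
  (forall (w : Om) b, F ((arr_of w, z_of w), @upd _ _ c (r_of w) b) = F w) ->
  \sum_(w : Om) prob lam p g w * F w * h (r_of w c) =
  (\sum_b phiR c b * h b) * \sum_(w : Om) prob lam p g w * F w.
Proof.
move=> HF; rewrite !sum_outcome big_distrr; apply: eq_bigr => a _ /=.
rewrite big_distrr; apply: eq_bigr => z _ /=.
pose G (r : Rr) := PA a * PZ z * F ((a, z), r).
transitivity (\sum_(r : Rr) PR r * G r * h (r c)).
  by apply: eq_bigr => r _; rewrite /G probE /=; ring.
transitivity ((\sum_b phiR c b * h b) * \sum_(r : Rr) PR r * G r); last first.
  by congr (_ * _); apply: eq_bigr => r _; rewrite /G probE /=; ring.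
apply: (@indep R _ _ phiR c G h true); last exact: sumR.
by move=> r k; rewrite /G -(HF ((a, z), r) k).
Qed.

Lemma indepA (F : Om -> R) (t : 'I_T) (h : option 'I_S -> R) :
  (forall (w : Om) o, F ((@upd _ _ t (arr_of w) o, z_of w), r_of w) = F w) ->
  \sum_(w : Om) prob lam p g w * F w * h (arr_of w t) =
  (\sum_o phiA t o * h o) * \sum_(w : Om) prob lam p g w * F w.
Proof.
move=> HF; rewrite !sum_outcome.
pose G (a : A) := \sum_(z : Z) \sum_(r : Rr) PZ z * PR r * F ((a, z), r).
transitivity (\sum_(a : A) PA a * G a * h (a t)).
  apply: eq_bigr => a _; rewrite /G big_distrr big_distrl /=.
  apply: eq_bigr => z _; rewrite big_distrr big_distrl /=.
  by apply: eq_bigr => r _; rewrite probE /=; ring.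
transitivity ((\sum_o phiA t o * h o) * \sum_(a : A) PA a * G a); last first.
  congr (_ * _); apply: eq_bigr => a _; rewrite /G big_distrr /=.
  apply: eq_bigr => z _; rewrite big_distrr /=.
  by apply: eq_bigr => r _; rewrite probE /=; ring.
apply: (@indep R _ _ phiA t G h None); last exact: sumA.
move=> a o; rewrite /G; apply: eq_bigr => z _; apply: eq_bigr => r _.
by rewrite -(HF ((a, z), r) o).
Qed.
End Main.

Lemma cdf_le1 (R : realType) (g : nat -> R) (T : nat) (g0 : g 0%N = 0)
  (g_ge0 : forall i, 0 <= g i) (g_sum1 : series g @ \oo --> (1 : R)) :
  cdfG g T <= 1.
Proof.
have -> : cdfG g T = series g T.+1.
  by rewrite /series /= /cdfG big_ltn // g0 add0r.
have hom : {homo series g : n m / (n <= m)%N >-> n <= m}.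
  by apply: nondecreasing_series => n _ _; exact: g_ge0.
have := nondecreasing_cvgn_le hom (cvgP _ g_sum1) T.+1.
by rewrite (cvg_lim _ g_sum1).
Qed.

Lemma b2rM (R : realType) (a b : bool) : ((a && b : nat)%:R : R) = (a : nat)%:R * (b : nat)%:R.
Proof. by case: a; case: b => /=; rewrite ?mul0r ?mul1r. Qed.

Lemma b2r_ge0 (R : realType) (a : bool) : 0 <= ((a : nat)%:R : R).
Proof. by case: a. Qed.

Lemma b2r_le1 (R : realType) (a : bool) : ((a : nat)%:R : R) <= 1.
Proof. by case: a. Qed.

Section Final.
Variables (R : realType) (V S T : nat) (lam : 'I_S -> 'I_T -> R)
  (p : 'I_V -> 'I_S -> R) (g : nat -> R).
Hypotheses (lam_ge0 : forall s t, 0 <= lam s t)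
  (lam_sum : forall t, \sum_(s < S) lam s t <= 1)
  (p_01 : forall v s, 0 <= p v s <= 1)
  (g_ge0 : forall i, 0 <= g i) (cdf1 : cdfG g T <= 1).
Variable pol : policy V S T.
Hypothesis pol_adm : clairvoyant_admissible pol.
Local Notation Om := (outcome V S T).
Local Notation P := (prob lam p g).
Local Notation PhiZ := (@phiZ R V T g).
Local Notation PhiR := (@phiR R V S T p).

Lemma prob_ge0 (w : Om) : 0 <= P w.
Proof.
rewrite probE; apply: mulr_ge0; first apply: mulr_ge0; apply: prodr_ge0 => c _.
- by case: (arr_of w c) => [s|] /=; [exact: lam_ge0 | rewrite subr_ge0].
- by rewrite /phiZ; case: ifP => _; [exact: g_ge0 | rewrite subr_ge0].
- by rewrite /phiR; case: ifP => _; case/andP: (p_01 c.1.1 c.2) => // _; rewrite subr_ge0.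
Qed.

Definition Y v s (t : 'I_T) := \sum_(w : Om) P w *
  ((arr_of w t == Some s) && (pol t w v && active pol w t v) : nat)%:R.

Lemma m_eq s t : \sum_(w : Om) P w * ((arr_of w t == Some s) : nat)%:R = lam s t.
Proof.
have := @indepA R V S T lam p g (fun _ => 1) t (fun o => ((o == Some s) : nat)%:R) (fun _ _ => erefl).
under eq_bigr do rewrite mulr1.
move=> ->; under [X in _ * X]eq_bigr do rewrite mulr1.
rewrite (@total_mass R V S T lam p g).
rewrite mulr1 sum_option /= mulr0 add0r (bigD1 s) //= eqxx mulr1 big1 ?addr0 //.
by move=> s' Hs; rewrite (inj_eq (@Some_inj _)) (negbTE Hs) mulr0.
Qed.

Lemma Y_ge0 v s t : 0 <= Y v s t.
Proof. by apply: sumr_ge0 => w _; apply: mulr_ge0; [exact: prob_ge0 | exact: b2r_ge0]. Qed.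

Lemma Y_le v s t : Y v s t <= lam s t.
Proof.
rewrite -m_eq; apply: ler_sum => w _; apply: ler_wpM2l; first exact: prob_ge0.
by case: (_ == _) => /=; [exact: b2r_le1 | ].
Qed.

Definition x v s t := Y v s t / lam s t.

Lemma lamx v s t : lam s t * x v s t = Y v s t.
Proof.
rewrite /x; have [H0|H] := eqVneq (lam s t) 0.
  have := Y_le v s t; rewrite H0 mul0r => Hle.
  by apply/esym/le_anti; rewrite Hle Y_ge0.
by rewrite mulrC mulfVK.
Qed.

Lemma sumZ_ge (c : 'I_V * 'I_T) d : (d < T)%N ->
  \sum_k PhiZ c k * ((d <= k)%N : nat)%:R = 1 - cdfG g d.
Proof.
move=> HdT.
have -> : \sum_k PhiZ c k * ((d <= k)%N : nat)%:R =
   \sum_k PhiZ c k - \sum_k PhiZ c k * ((k < d)%N : nat)%:R.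
  rewrite -sumrB; apply: eq_bigr => k _; rewrite leqNgt.
  by case: (k < d)%N => /=; ring.
rewrite (@sumZ R V T g c); congr (_ - _).
pose f (n : nat) := if (n < T)%N then g n.+1 else 1 - cdfG g T.
transitivity (\sum_(k < T.+1 | (k < d)%N) f k).
  by rewrite [RHS]big_mkcond /=; apply: eq_bigr => k _; rewrite /f /phiZ; case: (k < d)%N => /=; ring.
rewrite -(@big_ord_widen_cond _ _ _ d T.+1 xpredT f); last by lia.
rewrite /cdfG big_add1 /= big_mkord; apply: eq_bigr => k _.
by rewrite /f (ltn_trans (ltn_ord k) HdT).
Qed.

Lemma sumY_N v (tau : 'I_T) : \sum_s Y v s tau = \sum_(w : Om) P w *
   ((arr_of w tau != None) && (pol tau w v && active pol w tau v) : nat)%:R.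
Proof.
rewrite /Y exchange_big /=; apply: eq_bigr => w _; rewrite -big_distrr /=; congr (_ * _).
case E: (arr_of w tau) => [s0|] /=.
  rewrite (bigD1 s0) //= eqxx big1 ?addr0 // => s Hs.
  by rewrite (inj_eq Some_inj) eq_sym (negbTE Hs).
by rewrite big1.
Qed.

Lemma feas : LP_feasible lam g x.
Proof.
split.
  move=> v s t; apply/andP; split.
    by apply: divr_ge0; [exact: Y_ge0 | exact: lam_ge0].
  rewrite /x; have [H0|H] := eqVneq (lam s t) 0.
    by rewrite H0 invr0 mulr0.
  have Hp : 0 < lam s t by rewrite lt_def H lam_ge0.
  by rewrite ler_pdivrMr // mul1r Y_le.
move=> v t.
have step : forall tau : 'I_T, (tau <= t)%N ->
    \sum_s lam s tau * x v s tau * (1 - cdfG g (t - tau)) =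
    \sum_(w : Om) P w * (@Ev V S T pol w t v tau : nat)%:R.
  move=> tau Ht.
  under eq_bigr do rewrite lamx.
  rewrite -big_distrl /= sumY_N.
  rewrite -(@sumZ_ge (v, tau) (t - tau)); last by have := ltn_ord t; lia.
  rewrite mulrC.
  have HI : forall (w : Om) k,
     (fun w : Om => ((arr_of w tau != None) && (pol tau w v && active pol w tau v) : nat)%:R : R)
       ((arr_of w, @upd _ _ (v, tau) (z_of w) k), r_of w) =
     (fun w : Om => ((arr_of w tau != None) && (pol tau w v && active pol w tau v) : nat)%:R : R) w.
    move=> w k /=.
    have Hag := @agree_updZ V S T w (v, tau) k.
    by rewrite -(@pol_agree V S T pol pol_adm tau _ _ v Hag) -(@active_agree V S T pol pol_adm tau _ _ v Hag).
  rewrite -(@indepZ R V S T lam p g _ (v, tau) (fun k => ((t - tau <= k)%N : nat)%:R) HI).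
  apply: eq_bigr => w _ /=; rewrite -mulrA -b2rM; congr (_ * (_ : nat)%:R).
  by rewrite /Ev !andbA.
rewrite (eq_bigr _ step) exchange_big /=.
apply: (@le_trans _ _ (\sum_(w : Om) P w)); last by rewrite (@total_mass R V S T lam p g).
apply: ler_sum => w _.
rewrite -big_distrr /= -[X in _ <= X]mulr1; apply: ler_wpM2l; first exact: prob_ge0.
by rewrite -natr_sum lern1 (@sumE_le1 V S T pol w t v).
Qed.

Lemma sumR_p (c : 'I_V * 'I_T * 'I_S) : \sum_b PhiR c b * ((b : bool) : nat)%:R = p c.1.1 c.2.
Proof. by rewrite big_bool /phiR /=; ring. Qed.

Lemma obj : expected_completed lam p g pol <= LP_obj lam p x.
Proof.
rewrite /expected_completed /LP_obj /num_completed.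
under eq_bigr do rewrite natr_sum big_distrr /=.
rewrite exchange_big /=; apply: ler_sum => t _.
have Ecomp : forall w : Om, ((completed pol w t : nat)%:R : R) =
    \sum_s ((arr_of w t == Some s) &&
       [exists v, [&& pol t w v, active pol w t v & r_of w (v, t, s)]] : nat)%:R.
  move=> w; rewrite /completed; case E: (arr_of w t) => [s0|].
    rewrite (bigD1 s0) //= eqxx big1 ?addr0 // => s Hs.
    by rewrite (inj_eq Some_inj) eq_sym (negbTE Hs).
  by rewrite big1.
under eq_bigr do rewrite Ecomp big_distrr /=.
rewrite exchange_big /=; apply: ler_sum => s _.
set C := \sum_w _.
have C1 : C <= lam s t.
  rewrite -m_eq; apply: ler_sum => w _; apply: ler_wpM2l; first exact: prob_ge0.
  by case: (_ == _) => /=; [exact: b2r_le1|].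
have C2 : C <= \sum_v Y v s t * p v s.
  pose F v (w : Om) : R := ((arr_of w t == Some s) && (pol t w v && active pol w t v) : nat)%:R.
  apply: (@le_trans _ _ (\sum_(w : Om) P w * \sum_v F v w * (r_of w (v, t, s) : nat)%:R)).
    apply: ler_sum => w _; apply: ler_wpM2l; first exact: prob_ge0.
    case Hb: (_ && [exists _, _]); last by apply: sumr_ge0 => v _; apply: mulr_ge0; exact: b2r_ge0.
    move/andP: Hb => [HA /existsP [v0 /and3P [H1 H2 H3]]].
    rewrite (bigD1 v0) //= /F HA H1 H2 H3 /= mul1r lerDl.
    by apply: sumr_ge0 => v _; apply: mulr_ge0; exact: b2r_ge0.
  rewrite (eq_bigr (fun w => \sum_v P w * F v w * (r_of w (v, t, s) : nat)%:R)); last first.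
    by move=> w _; rewrite big_distrr /=; apply: eq_bigr => v _; rewrite mulrA.
  rewrite exchange_big /=; apply: ler_sum => v _.
  have HI : forall (w : Om) b, F v ((arr_of w, z_of w), @upd _ _ (v, t, s) (r_of w) b) = F v w.
    move=> w b; rewrite /F /=.
    have Hag := @agree_updR V S T w (v, t, s) b.
    by rewrite -(@pol_agree V S T pol pol_adm t _ _ v Hag) -(@active_agree V S T pol pol_adm t _ _ v Hag).
  rewrite (@indepR R V S T lam p g (F v) (v, t, s) (fun b => ((b : bool) : nat)%:R) HI).
  by rewrite sumR_p /= mulrC.
rewrite minEle; case: ifP => _.
  rewrite big_distrr /=.
  by under eq_bigr do rewrite mulrA lamx.
by rewrite mulr1.
Qed.
End Final.

Theorem proposition1 (R : realType) (V S T : nat)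
  (lam : 'I_S -> 'I_T -> R) (p : 'I_V -> 'I_S -> R) (g : nat -> R)
  (lam_ge0 : forall s t, 0 <= lam s t)
  (lam_sum : forall t, \sum_(s < S) lam s t <= 1)
  (p_01 : forall v s, 0 <= p v s <= 1)
  (g0 : g 0%N = 0)
  (g_ge0 : forall i, 0 <= g i)
  (g_sum1 : series g @ \oo --> (1 : R))
  (pol : policy V S T) (pol_adm : clairvoyant_admissible pol) :
  exists x : 'I_V -> 'I_S -> 'I_T -> R,
    LP_feasible lam g x /\ expected_completed lam p g pol <= LP_obj lam p x.
Proof.
have cdf1 := @cdf_le1 R g T g0 g_ge0 g_sum1.
exists (@x R V S T lam p g pol); split.
  exact: feas.
exact: obj.
Qed.
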